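(* Let $d\ge1$, $s_1\ge0$, $s_2\le0$, $\alpha>0$, $\beta>0$, and $g\in L^2(\mathbb{T}^d;\mathbb{C})$; set $\tilde g=g-\frac{1}{|\mathbb{T}^d|}\int_{\mathbb{T}^d}g\,dx$. Consider $$I(u,v)=\frac12\|(-\Delta)^{s_1/2}u\|^2+\frac\alpha2\|u+v-g\|^2+\frac\beta2\|R_{s_2/2}(v)\|^2$$ for $u\in H^{s_1}_0(\mathbb{T}^d;\mathbb{C})$, $v\in\dot H^{s_2}(\mathbb{T}^d;\mathbb{C})\cap L^2_0(\mathbb{T}^d;\mathbb{C})$. Then there exist $\tilde u\in H^{s_1}_0(\mathbb{T}^d;\mathbb{C})$ and $v\in\dot H^{s_2}(\mathbb{T}^d;\mathbb{C})\cap L^2_0(\mathbb{T}^d;\mathbb{C})$ such that $(\tilde u,v)$ minimizes $I$. Moreover, $u:=\tilde u+\frac{1}{|\mathbb{T}^d|}\int_{\mathbb{T}^d}g\,dx$ and $v$ satisfy $$\int_{\mathbb{T}^d}(u(x)-g(x))\,dx=\int_{\mathbb{T}^d}v(x)\,dx=0,$$ and the solution pair $(u,v)$ is unique.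
   Context: $\mathbb{T}^d=\mathbb{R}^d/(2\pi\mathbb{Z})^d$, $\|\cdot\|$ is the $L^2(\mathbb{T}^d;\mathbb{C})$ norm, $L^2_0$ the zero-mean subspace. $\hat u_k=\int_{\mathbb{T}^d}u\,e^{-ik\cdot x}dx$. Fractional Laplacian: $(-\Delta)^\sigma u=(2\pi)^{-d}\sum_{k}|k|^{2\sigma}\hat u_ke^{ik\cdot x}$; Riesz potential for $\sigma\le0$: $R_\sigma(u)=(2\pi)^{-d}\sum_{k\ne0}|k|^{2\sigma}\hat u_ke^{ik\cdot x}$. For $\sigma\ge0$, $H^\sigma_0=\{u\in L^2_0:\sum_{k\ne0}|k|^{2\sigma}|\hat u_k|^2<\infty\}$; for $\sigma<0$, $\dot H^\sigma$ is the completion of $L^2_0$ with respect to the norm $(\sum_{k\ne0}|k|^{2\sigma}|\hat u_k|^2)^{1/2}$. *)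

(* Defs.v *)
From mathcomp Require Import all_boot all_order all_algebra.
From mathcomp Require Import complex.
From mathcomp Require Import all_classical all_reals all_analysis.
Import Order.TTheory GRing.Theory Num.Theory.

Set Implicit Arguments.
Unset Strict Implicit.
Unset Printing Implicit Defensive.

Local Open Scope ring_scope.

Definition Zd (d : nat) := {ffun 'I_d -> int}.
Definition zeroZ (d : nat) : Zd d := [ffun=> 0%R].

Definition knorm2 (R : realType) (d : nat) (k : Zd d) : R :=
  \sum_(i < d) ((k i)%:~R) ^+ 2.

(* An element u of L^2(T^d;C) is represented by its family of Fourier
   coefficients  k |-> \hat u_k = \int_{T^d} u e^{-ik.x} dx
   (Riesz-Fischer / Plancherel identification). *)
Definition Coef (R : realType) (d : nat) := Zd d -> R[i].

Definition cabs2 (R : realType) (z : R[i]) : R :=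
  complex.Re z ^+ 2 + complex.Im z ^+ 2.

(* ||u||^2 = \int_{T^d} |u|^2 = (2 pi)^{-d} sum_k |\hat u_k|^2 (Parseval) *)
Definition L2norm2 (R : realType) (d : nat) (f : Coef R d) : \bar R :=
  (((2 * pi) ^- d)%:E * \esum_(k in [set: Zd d]) (cabs2 (f k))%:E)%E.

Definition inL2 (R : realType) (d : nat) (f : Coef R d) : Prop :=
  (\esum_(k in [set: Zd d]) (cabs2 (f k))%:E < +oo)%E.

(* u in L^2_0 : zero mean, i.e. \hat u_0 = \int u = 0 *)
Definition inL2_0 (R : realType) (d : nat) (f : Coef R d) : Prop :=
  inL2 f /\ f (zeroZ d) = 0.

Definition weighted_finite (R : realType) (d : nat) (s : R) (f : Coef R d) : Prop :=
  (\esum_(k in [set k : Zd d | k != zeroZ d])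
      (powR (knorm2 R k) s * cabs2 (f k))%:E < +oo)%E.

Definition inH0 (R : realType) (d : nat) (s : R) (f : Coef R d) : Prop :=
  inL2_0 f /\ weighted_finite s f.

(* \dot H^s (s < 0 or s <= 0) intersected with L^2_0 : an element of L^2_0
   (embedded in the completion) whose \dot H^s norm is finite *)
Definition inHdot_L2_0 (R : realType) (d : nat) (s : R) (f : Coef R d) : Prop :=
  inL2_0 f /\ weighted_finite s f.

Definition fracLap (R : realType) (d : nat) (sigma : R) (f : Coef R d) : Coef R d :=
  fun k => (powR (knorm2 R k) sigma)%:C%C * f k.

Definition riesz (R : realType) (d : nat) (sigma : R) (f : Coef R d) : Coef R d :=
  fun k => if k == zeroZ d then 0 else (powR (knorm2 R k) sigma)%:C%C * f k.

Definition torus_integral (R : realType) (d : nat) (f : Coef R d) : R[i] :=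
  f (zeroZ d).

(* (1/|T^d|) \int_{T^d} u dx, with |T^d| = (2 pi)^d *)
Definition torus_mean (R : realType) (d : nat) (f : Coef R d) : R[i] :=
  torus_integral f / ((2 * pi) ^+ d)%:C%C.

(* u + c for a constant c (constant function c has coefficients c (2pi)^d at 0) *)
Definition add_const (R : realType) (d : nat) (f : Coef R d) (c : R[i]) : Coef R d :=
  fun k => f k + (if k == zeroZ d then c * ((2 * pi) ^+ d)%:C%C else 0).

Definition coef_add_sub (R : realType) (d : nat) (u v g : Coef R d) : Coef R d :=
  fun k => u k + v k - g k.

Definition I_fun (R : realType) (d : nat) (s1 s2 alpha beta : R) (g u v : Coef R d)
  : \bar R :=
  ((2^-1)%:E * L2norm2 (fracLap (s1 / 2) u)
   + (alpha / 2)%:E * L2norm2 (coef_add_sub u v g)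
   + (beta / 2)%:E * L2norm2 (riesz (s2 / 2) v))%E.

Definition is_minimizer (R : realType) (d : nat) (s1 s2 alpha beta : R)
  (g u v : Coef R d) : Prop :=
  inH0 s1 u /\ inHdot_L2_0 s2 v /\
  forall u' v' : Coef R d, inH0 s1 u' -> inHdot_L2_0 s2 v' ->
    (I_fun s1 s2 alpha beta g u v <= I_fun s1 s2 alpha beta g u' v')%E.

(* Main.v *)
Require Import Defs.
From mathcomp Require Import all_boot all_order all_algebra.
From mathcomp Require Import complex.
From mathcomp Require Import all_classical all_reals all_analysis.
From mathcomp Require Import ring lra.
Import Order.TTheory GRing.Theory Num.Theory.
Local Open Scope ring_scope.

Lemma key (R : realType) (a B al : R) (g p q : R[i]) : 0 < a -> 0 < B -> 0 < al ->
  a * cabs2 p + al * cabs2 (p + q - g) + B * cabs2 q =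
  a * cabs2 ((al * B / (a * B + al * a + al * B))%:C%C * g)
  + al * cabs2 ((al * B / (a * B + al * a + al * B))%:C%C * g
                + (al * a / (a * B + al * a + al * B))%:C%C * g - g)
  + B * cabs2 ((al * a / (a * B + al * a + al * B))%:C%C * g) +
  (a * cabs2 (p - (al * B / (a * B + al * a + al * B))%:C%C * g)
   + al * cabs2 ((p - (al * B / (a * B + al * a + al * B))%:C%C * g)
                 + (q - (al * a / (a * B + al * a + al * B))%:C%C * g))
   + B * cabs2 (q - (al * a / (a * B + al * a + al * B))%:C%C * g)).
Proof.
move=> a0 B0 al0.
have D0 : a * B + al * a + al * B != 0.
  by apply/lt0r_neq0; rewrite !addr_gt0 ?mulr_gt0.
rewrite /cabs2; case: g => g1 g2; case: p => p1 p2; case: q => q1 q2 /=.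
by field.
Qed.

Lemma cabs2_ge0 (R : realType) (z : R[i]) : 0 <= cabs2 z.
Proof. by rewrite /cabs2 addr_ge0 ?sqr_ge0. Qed.

Lemma cabs2_scale (R : realType) (r : R) (z : R[i]) :
  cabs2 (r%:C%C * z) = r ^+ 2 * cabs2 z.
Proof. by case: z => a b; rewrite /cabs2 /=; ring. Qed.

Lemma cabs2N (R : realType) (z : R[i]) : cabs2 (- z) = cabs2 z.
Proof. by case: z => a b; rewrite /cabs2 /= !sqrrN. Qed.

Lemma cabs20 (R : realType) : cabs2 (0 : R[i]) = 0.
Proof. by rewrite /cabs2 /= expr0n /= addr0. Qed.

Lemma cabs2_eq0 (R : realType) (z : R[i]) : cabs2 z = 0 -> z = 0.
Proof.
case: z => a b; rewrite /cabs2 /= => /eqP.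
rewrite paddr_eq0 ?sqr_ge0 // !sqrf_eq0 => /andP[/eqP -> /eqP ->].
by [].
Qed.

Lemma powR_half (R : realType) (x s : R) : (powR x (s / 2)) ^+ 2 = powR x s.
Proof.
by rewrite -powR_mulrn ?powR_ge0 // -powRrM divfK // pnatr_eq0.
Qed.

Lemma knorm2_gt0 (R : realType) d (k : Zd d) : k != zeroZ d -> 0 < knorm2 R k.
Proof.
move=> hk.
have [i hi] : exists i, k i != 0.
  apply/existsP; apply: contraNT hk; rewrite negb_exists => /forallP h.
  apply/eqP/ffunP => i; rewrite ffunE; apply/eqP; move: (h i); by rewrite negbK.
rewrite /knorm2 (bigD1 i) //=.
have h1 : 0 < ((k i)%:~R : R) ^+ 2.
  by rewrite lt_def sqr_ge0 andbT sqrf_eq0 intr_eq0.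
have h2 : 0 <= \sum_(j < d | j != i) ((k j)%:~R : R) ^+ 2.
  by apply: sumr_ge0 => j _; rewrite sqr_ge0.
lra.
Qed.

Lemma esum_subsetT (R : realType) (T : choiceType) (I : set T) (a : T -> \bar R) :
  (\esum_(i in I) a i <= \esum_(i in [set: T]) a i)%E.
Proof.
rewrite ge_ereal_sup => //= _ [X [finX XI]] <-; rewrite esum_ge//.
by exists X.
Qed.

Lemma esumZ_le (R : realType) (T : choiceType) (I : set T) (c : R) (a : T -> \bar R) :
  0 <= c -> (forall i, (0 <= a i)%E) ->
  (\esum_(i in I) (c%:E * a i) <= c%:E * \esum_(i in I) a i)%E.
Proof.
move=> c0 a0; rewrite ge_ereal_sup => //= _ [X [finX XI]] <-.
rewrite -ge0_mule_fsumr //; apply: lee_wpmul2l; first by rewrite lee_fin.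
by rewrite esum_ge//; exists X.
Qed.

Lemma esumZ (R : realType) (T : choiceType) (I : set T) (c : R) (a : T -> \bar R) :
  0 <= c -> (forall i, (0 <= a i)%E) ->
  \esum_(i in I) (c%:E * a i)%E = (c%:E * \esum_(i in I) a i)%E.
Proof.
move=> c0 a0; apply/eqP; rewrite eq_le esumZ_le //=.
have [->|cn0] := eqVneq c 0.
  by rewrite mul0e esum_ge0 // => i _; rewrite mul0e.
have cp : 0 < c by rewrite lt_def cn0.
have h : (\esum_(i in I) a i <= c^-1%:E * \esum_(i in I) (c%:E * a i))%E.
  rewrite (@le_trans _ _ (\esum_(i in I) (c^-1%:E * (c%:E * a i))%E))//.
    by apply: le_esum => i _; rewrite muleA -EFinM mulVf // mul1e.
  apply: esumZ_le; first by rewrite invr_ge0.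
  by move=> i; rewrite mule_ge0 // lee_fin.
rewrite -(@lee_pmul2l _ (c^-1)%:E) //; last by rewrite lte_fin invr_gt0.
by rewrite muleA -EFinM mulVf // mul1e.
Qed.

Set Implicit Arguments.
Unset Strict Implicit.

Lemma esum_bound (R : realType) d (g : Coef R d) (hg : inL2 g) (I : set (Zd d))
  (f : Zd d -> R) (c : R) : 0 <= c -> (forall k, I k -> f k <= c * cabs2 (g k)) ->
  (\esum_(k in I) (f k)%:E < +oo)%E.
Proof.
move=> c0 hf.
apply: (le_lt_trans (le_esum (b := fun k => (c * cabs2 (g k))%:E) _)).
  by move=> k Ik; rewrite lee_fin; exact: hf.
apply: le_lt_trans (@esum_subsetT _ _ I _) _.
under eq_esum => k _ do rewrite EFinM.
rewrite esumZ //; last by move=> k; rewrite lee_fin cabs2_ge0.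
move: hg; rewrite /inL2 => hg.
have hfin : \esum_(k in [set: Zd d]) (cabs2 (g k))%:E \is a fin_num.
  by rewrite ge0_fin_numE // esum_ge0 // => k _; rewrite lee_fin cabs2_ge0.
by rewrite -(fineK hfin) -EFinM ltry.
Qed.

Section Freq.
Variables (R : realType) (d : nat) (s1 s2 al be : R) (g : Coef R d).
Hypotheses (hal : 0 < al) (hbe : 0 < be).

Definition aw (k : Zd d) : R := powR (knorm2 R k) s1.
Definition bw (k : Zd d) : R := be * powR (knorm2 R k) s2.
Definition Dn k := aw k * bw k + al * aw k + al * bw k.
Definition ust : Coef R d := fun k =>
  if k == zeroZ d then 0 else ((al * bw k / Dn k)%:C%C * g k).
Definition vst : Coef R d := fun k =>
  if k == zeroZ d then 0 else ((al * aw k / Dn k)%:C%C * g k).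
Definition Fk (u v : Coef R d) k : R :=
  cabs2 (fracLap (s1 / 2) u k) + al * cabs2 (coef_add_sub u v g k)
  + be * cabs2 (riesz (s2 / 2) v k).

Lemma nn3 (a b c x y z : R) : 0 <= a -> 0 <= b -> 0 <= c -> 0 <= x -> 0 <= y ->
  0 <= z -> 0 <= a * x + b * y + c * z.
Proof.
move=> *; apply: addr_ge0; [apply: addr_ge0|]; apply: mulr_ge0 => //.
Qed.

Ltac nn3t := apply: nn3; solve [by apply: ltW | exact: cabs2_ge0].

Lemma aw_gt0 k : k != zeroZ d -> 0 < aw k.
Proof. by move=> hk; apply: powR_gt0; exact: knorm2_gt0. Qed.

Lemma bw_gt0 k : k != zeroZ d -> 0 < bw k.
Proof. by move=> hk; apply: mulr_gt0 => //; apply: powR_gt0; exact: knorm2_gt0. Qed.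

Lemma Dn_gt0 k : k != zeroZ d -> 0 < Dn k.
Proof.
move=> hk; have h1 := aw_gt0 hk; have h2 := bw_gt0 hk.
rewrite /Dn; apply: addr_gt0; [apply: addr_gt0|]; apply: mulr_gt0 => //.
Qed.

Lemma Fk_ge0 u v k : 0 <= Fk u v k.
Proof.
move: (@cabs2_ge0 _ (fracLap (s1/2) u k)) (@cabs2_ge0 _ (coef_add_sub u v g k))
  (@cabs2_ge0 _ (riesz (s2/2) v k)); rewrite /Fk => h1 h2 h3.
have := mulr_ge0 (ltW hal) h2; have := mulr_ge0 (ltW hbe) h3; lra.
Qed.

Lemma Fk_nz u v k : k != zeroZ d ->
  Fk u v k = aw k * cabs2 (u k) + al * cabs2 (u k + v k - g k) + bw k * cabs2 (v k).
Proof.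
move=> hk; rewrite /Fk /fracLap /riesz (negbTE hk) !cabs2_scale !powR_half.
by rewrite /coef_add_sub /bw /aw mulrA.
Qed.

Lemma Fk_0 u v : u (zeroZ d) = 0 -> v (zeroZ d) = 0 ->
  Fk u v (zeroZ d) = al * cabs2 (g (zeroZ d)).
Proof.
move=> hu hv; rewrite /Fk /fracLap /riesz /coef_add_sub eqxx hu hv mulr0.
by rewrite !cabs20 !add0r cabs2N mulr0 addr0.
Qed.

Lemma Fk_decomp u v k : k != zeroZ d ->
  Fk u v k = Fk ust vst k +
   (aw k * cabs2 (u k - ust k) + al * cabs2 ((u k - ust k) + (v k - vst k))
    + bw k * cabs2 (v k - vst k)).
Proof.
move=> hk; rewrite !Fk_nz // /ust /vst (negbTE hk) /Dn.
exact: key (aw_gt0 hk) (bw_gt0 hk) hal.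
Qed.

Lemma Fk_min u v k : u (zeroZ d) = 0 -> v (zeroZ d) = 0 ->
  Fk ust vst k <= Fk u v k.
Proof.
move=> hu hv; have [->|hk] := eqVneq k (zeroZ d).
  by rewrite !Fk_0 // /ust /vst eqxx.
rewrite (Fk_decomp u v hk) lerDl.
have h1 := aw_gt0 hk; have h2 := bw_gt0 hk.
nn3t.
Qed.

Lemma Fk_star_le k : Fk ust vst k <= al * cabs2 (g k).
Proof.
have -> : al * cabs2 (g k) = Fk (fun _ => 0) (fun _ => 0) k.
  rewrite /Fk /fracLap /riesz /coef_add_sub !mulr0 !cabs20 !add0r cabs2N.
  by case: ifP => _; rewrite ?mulr0 cabs20 mulr0 addr0.
exact: Fk_min.
Qed.

Lemma ust_le k : cabs2 (ust k) <= cabs2 (g k).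
Proof.
rewrite /ust; case: ifPn => hk; first by rewrite cabs20 cabs2_ge0.
rewrite cabs2_scale.
have h1 := aw_gt0 hk; have h2 := bw_gt0 hk; have h3 := Dn_gt0 hk.
have c0 : 0 <= al * bw k / Dn k by apply: divr_ge0; [apply: mulr_ge0|]; apply: ltW.
have c1 : al * bw k / Dn k <= 1.
  rewrite ler_pdivrMr // mul1r /Dn.
  have : 0 <= aw k * bw k by rewrite mulr_ge0 ?ltW.
  have : 0 <= al * aw k by rewrite mulr_ge0 ?ltW.
  lra.
apply: ler_piMl; [exact: cabs2_ge0 | by rewrite expr_le1].
Qed.

Lemma vst_le k : cabs2 (vst k) <= cabs2 (g k).
Proof.
rewrite /vst; case: ifPn => hk; first by rewrite cabs20 cabs2_ge0.
rewrite cabs2_scale.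
have h1 := aw_gt0 hk; have h2 := bw_gt0 hk; have h3 := Dn_gt0 hk.
have c0 : 0 <= al * aw k / Dn k by apply: divr_ge0; [apply: mulr_ge0|]; apply: ltW.
have c1 : al * aw k / Dn k <= 1.
  rewrite ler_pdivrMr // mul1r /Dn.
  have : 0 <= aw k * bw k by rewrite mulr_ge0 ?ltW.
  have : 0 <= al * bw k by rewrite mulr_ge0 ?ltW.
  lra.
apply: ler_piMl; [exact: cabs2_ge0 | by rewrite expr_le1].
Qed.

Lemma ust_w k : k != zeroZ d -> aw k * cabs2 (ust k) <= al * cabs2 (g k).
Proof.
move=> hk; apply: le_trans (Fk_star_le k); rewrite Fk_nz //.
have h1 := aw_gt0 hk; have h2 := bw_gt0 hk.
rewrite -addrA lerDl; apply: addr_ge0; apply: mulr_ge0; solve [by apply: ltW | exact: cabs2_ge0].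
Qed.

Lemma vst_w k : k != zeroZ d ->
  powR (knorm2 R k) s2 * cabs2 (vst k) <= al / be * cabs2 (g k).
Proof.
move=> hk; rewrite -(ler_pM2l hbe).
rewrite [X in _ <= X](_ : _ = al * cabs2 (g k)); last by field; exact: lt0r_neq0.
apply: le_trans (Fk_star_le k); rewrite Fk_nz //.
have h1 := aw_gt0 hk; have h2 := bw_gt0 hk.
rewrite mulrA -/(bw k) lerDr; apply: addr_ge0; apply: mulr_ge0; solve [by apply: ltW | exact: cabs2_ge0].
Qed.


Hypothesis (hg : inL2 g).

Let c := (2 * pi) ^- d / 2 :> R.
Lemma c_gt0 : 0 < c.
Proof.
rewrite /c; apply: divr_gt0 => //; rewrite invr_gt0; apply: exprn_gt0.
by apply: mulr_gt0 => //; exact: pi_gt0.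
Qed.

Lemma I_eq u v : I_fun s1 s2 al be g u v =
  (c%:E * \esum_(k in [set: Zd d]) (Fk u v k)%:E)%E.
Proof.
rewrite /I_fun /L2norm2.
set A := fun k => (cabs2 (fracLap (s1 / 2) u k))%:E.
set B := fun k => (cabs2 (coef_add_sub u v g k))%:E.
set C := fun k => (cabs2 (riesz (s2 / 2) v k))%:E.
have hA : forall k, (0 <= A k)%E by move=> k; rewrite lee_fin cabs2_ge0.
have hB : forall k, (0 <= B k)%E by move=> k; rewrite lee_fin cabs2_ge0.
have hC : forall k, (0 <= C k)%E by move=> k; rewrite lee_fin cabs2_ge0.
have hB' : forall k, (0 <= al%:E * B k)%E by move=> k; rewrite mule_ge0 // lee_fin ltW.
have hC' : forall k, (0 <= be%:E * C k)%E by move=> k; rewrite mule_ge0 // lee_fin ltW.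
rewrite (eq_esum (a := fun k => (Fk u v k)%:E) (b := fun k => (A k + al%:E * B k) + be%:E * C k)%E); last first.
  by move=> k _; rewrite /Fk !EFinD !EFinM.
rewrite esumD; last 2 first.
- by move=> k _; rewrite adde_ge0.
- by move=> k _.
rewrite esumD; last 2 first.
- by move=> k _.
- by move=> k _.
rewrite !esumZ //; last 2 first.
- by rewrite ltW.
- by rewrite ltW.
have sA : (0 <= \esum_(k in [set: Zd d]) A k)%E by rewrite esum_ge0.
have sB : (0 <= \esum_(k in [set: Zd d]) B k)%E by rewrite esum_ge0.
have sC : (0 <= \esum_(k in [set: Zd d]) C k)%E by rewrite esum_ge0.
rewrite ge0_muleDr; last 2 first.
- by rewrite adde_ge0 // mule_ge0 // lee_fin ltW.
- by rewrite mule_ge0 // lee_fin ltW.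
rewrite ge0_muleDr //; last by rewrite mule_ge0 // lee_fin ltW.
rewrite !muleA -!EFinM.
have h2 : (2 : R) != 0 by rewrite pnatr_eq0.
have hp : (2 * pi) ^+ d != 0 :> R.
  by apply: expf_neq0; apply: mulf_neq0 => //; apply: lt0r_neq0; exact: pi_gt0.
by congr (_ + _ + _)%E; congr (_%:E * _)%E; rewrite /c; field.
Qed.

Lemma ust_min : is_minimizer s1 s2 al be g ust vst.
Proof.
have hab : 0 <= al / be by apply: divr_ge0; apply: ltW.
split; [split; [split|]|split; [split; [split|]|]].
- rewrite /inL2; apply: (@esum_bound _ _ g hg _ (fun k => cabs2 (ust k)) 1) => // k _.
  by rewrite mul1r; exact: ust_le.
- by rewrite /ust eqxx.
- rewrite /weighted_finite.
  apply: (@esum_bound _ _ g hg _ (fun k => powR (knorm2 R k) s1 * cabs2 (ust k)) al).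
    exact: ltW.
  by move=> k /= hk; exact: ust_w.
- rewrite /inL2; apply: (@esum_bound _ _ g hg _ (fun k => cabs2 (vst k)) 1) => // k _.
  by rewrite mul1r; exact: vst_le.
- by rewrite /vst eqxx.
- rewrite /weighted_finite.
  apply: (@esum_bound _ _ g hg _ (fun k => powR (knorm2 R k) s2 * cabs2 (vst k)) (al / be)) => //.
  by move=> k /= hk; exact: vst_w.
- move=> u' v' [[_ hu0] _] [[_ hv0] _]; rewrite !I_eq.
  apply: lee_wpmul2l; first by rewrite lee_fin ltW // c_gt0.
  by apply: le_esum => k _; rewrite lee_fin; exact: Fk_min.
Qed.

Lemma ust_unique u v : is_minimizer s1 s2 al be g u v -> u = ust /\ v = vst.
Proof.
move=> [[[_ hu0] _] [[[_ hv0] _] hmin]].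
have [Hu [Hv _]] := ust_min.
have h1 := hmin ust vst Hu Hv.
rewrite !I_eq lee_pmul2l // ?lte_fin ?c_gt0 // in h1.
have Xlt : (\esum_(k in [set: Zd d]) (Fk ust vst k)%:E < +oo)%E.
  apply: (@esum_bound _ _ g hg _ (fun k => Fk ust vst k) al) => //.
    exact: ltW.
  by move=> k _; exact: Fk_star_le.
have Xfin : \esum_(k in [set: Zd d]) (Fk ust vst k)%:E \is a fin_num.
  by rewrite ge0_fin_numE // esum_ge0 // => k _; rewrite lee_fin Fk_ge0.
pose E k := Fk u v k - Fk ust vst k.
have E0 : forall k, 0 <= E k by move=> k; rewrite /E subr_ge0 Fk_min.
have eX : \esum_(k in [set: Zd d]) (Fk u v k)%:E =
    (\esum_(k in [set: Zd d]) (Fk ust vst k)%:E + \esum_(k in [set: Zd d]) (E k)%:E)%E.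
  rewrite -esumD; last 2 first.
  - by move=> k _; rewrite lee_fin Fk_ge0.
  - by move=> k _; rewrite lee_fin E0.
  by apply: eq_esum => k _; rewrite -EFinD /E addrC subrK.
have hE : (\esum_(k in [set: Zd d]) (E k)%:E <= 0)%E.
  move: h1; rewrite eX -[X in (_ <= X)%E]adde0 leeD2lE //.
have Ek0 : forall k, E k = 0.
  move=> k; apply/eqP; rewrite eq_le E0 andbT -lee_fin; apply: le_trans hE.
  apply: esum_ge; exists [set k]%classic; last by rewrite fsbig_set1.
  by split; [exact: finite_set1|].
have key0 : forall k, k != zeroZ d -> u k = ust k /\ v k = vst k.
  move=> k hk.
  have := Ek0 k; rewrite /E (Fk_decomp u v hk) => hX.
  have h1' := aw_gt0 hk; have h2' := bw_gt0 hk.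
  have t1 := mulr_ge0 (ltW h1') (@cabs2_ge0 _ (u k - ust k)).
  have t2 := mulr_ge0 (ltW hal) (@cabs2_ge0 _ ((u k - ust k) + (v k - vst k))).
  have t3 := mulr_ge0 (ltW h2') (@cabs2_ge0 _ (v k - vst k)).
  have z1 : aw k * cabs2 (u k - ust k) = 0 by lra.
  have z3 : bw k * cabs2 (v k - vst k) = 0 by lra.
  move: z1 z3 => /eqP; rewrite mulf_eq0 (gt_eqF h1') /= => /eqP /cabs2_eq0 /subr0_eq ->.
  move=> /eqP; rewrite mulf_eq0 (gt_eqF h2') /= => /eqP /cabs2_eq0 /subr0_eq ->.
  by [].
split; apply/funext => k; have [->|hk] := eqVneq k (zeroZ d).
- by rewrite hu0 /ust eqxx.
- by case: (key0 k hk).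
- by rewrite hv0 /vst eqxx.
- by case: (key0 k hk).
Qed.

End Freq.

Theorem theorem7 (R : realType) (d : nat) (hd : (1 <= d)%N)
  (s1 s2 alpha beta : R) (hs1 : 0 <= s1) (hs2 : s2 <= 0)
  (halpha : 0 < alpha) (hbeta : 0 < beta)
  (g : Coef R d) (hg : inL2 g) :
  (exists (ut v : Coef R d), is_minimizer s1 s2 alpha beta g ut v)
  /\ (forall ut v : Coef R d, is_minimizer s1 s2 alpha beta g ut v ->
        let u := add_const ut (torus_mean g) in
        torus_integral (coef_add_sub u (fun _ => 0) g) = 0 /\
        torus_integral v = 0)
  /\ (forall ut1 v1 ut2 v2 : Coef R d,
        is_minimizer s1 s2 alpha beta g ut1 v1 ->
        is_minimizer s1 s2 alpha beta g ut2 v2 ->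
        add_const ut1 (torus_mean g) = add_const ut2 (torus_mean g) /\ v1 = v2).
Proof.
split; first by eexists; eexists; exact: (ust_min s1 s2 halpha hbeta hg).
split.
  move=> ut v [[[_ h0] _] [[[_ hv0] _] _]] /=; split; last exact: hv0.
  have hp : ((2 * pi) ^+ d)%:C%C != 0 :> R[i].
    apply/eqP => h; have := congr1 (@complex.Re R) h; rewrite /=; apply/eqP.
    apply: expf_neq0; apply: mulf_neq0 => //; apply: lt0r_neq0; exact: pi_gt0.
  rewrite /torus_integral /coef_add_sub /add_const /torus_mean /torus_integral eqxx h0.
  by rewrite add0r addr0 divfK // subrr.
move=> ut1 v1 ut2 v2 m1 m2.
have [-> ->] := ust_unique halpha hbeta hg m1.
by have [-> ->] := ust_unique halpha hbeta hg m2.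
Qed.
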